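(* Let $1 \to \mathbf{Z} \to \mathbf{G} \xrightarrow{\pi} \mathbf{H} \to 1$ be a short exact sequence of groups (so $\mathbf{Z} = \ker\pi$ and $\pi$ is surjective), and let $\Delta$ be a poset with a bottom element $O$. Let $\Pi \colon \mathbf{G}^{\Delta} \to \mathbf{H}^{\Delta}$ be the functor induced by $\pi$, and let $\widetilde{\mathbf{H}^{\Delta}}$ be a subcategory of $\mathbf{H}^{\Delta}$ containing all objects of $\mathbf{H}^{\Delta}$ such that every hom-set $\mathrm{Hom}_{\widetilde{\mathbf{H}^{\Delta}}}(U,V)$ consists of exactly one morphism (in particular every endomorphism monoid in $\widetilde{\mathbf{H}^{\Delta}}$ is trivial). Let $\widetilde{\mathbf{G}^{\Delta}}$ be the pull-back of $\Pi$ along the inclusion $\iota \colon \widetilde{\mathbf{H}^{\Delta}} \to \mathbf{H}^{\Delta}$. Then for any objects $U$ and $V$ of $\widetilde{\mathbf{G}^{\Delta}}$, the map $\eta \mapsto \eta_O$ is a bijection from the hom-set $\mathrm{Hom}_{\widetilde{\mathbf{G}^{\Delta}}}(U,V)$ onto a coset of $\mathbf{Z}$ in $\mathbf{G}$.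
   Context: Groups are regarded as single-object categories whose morphisms are the group elements; a poset is a category with one morphism $x \to y$ iff $x \le y$, and a bottom element $O$ satisfies $O\le x$ for all $x$. For a group $\mathbf{K}$, $\mathbf{K}^{\Delta}$ is the category of functors $\Delta \to \mathbf{K}$ and natural transformations; a natural transformation $\eta\colon F\to F'$ in $\mathbf{G}^{\Delta}$ is determined by its component $\eta_O\in\mathbf{G}$, which can be any element of $\mathbf{G}$. The functor $\Pi$ sends an object $F$ to $\pi \circ F$ and a morphism $\eta$ to the natural transformation $\pi\eta$ with components $\pi(\eta_x)$ (the paper describes $\Pi$ as ''the identity on objects'', identifying $F$ with $\pi\circ F$). Concretely, $\widetilde{\mathbf{G}^{\Delta}}$ is the category whose objects are the objects $F$ of $\mathbf{G}^{\Delta}$ and whose morphisms $F \to F'$ are the natural transformations $\eta \colon F \to F'$ in $\mathbf{G}^{\Delta}$ such that $\Pi(\eta)$ is a morphism of $\widetilde{\mathbf{H}^{\Delta}}$. *)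

(* Defs.v *)
Set Implicit Arguments.

(* A group, with composition written gmul; regarded as a one-object category
   whose morphisms are the elements, composition g o f := gmul g f. *)
Record Group := {
  gcar :> Type;
  gmul : gcar -> gcar -> gcar;
  gone : gcar;
  ginv : gcar -> gcar;
  gmulA : forall x y z, gmul x (gmul y z) = gmul (gmul x y) z;
  gmul1l : forall x, gmul gone x = x;
  gmul1r : forall x, gmul x gone = x;
  gmulVl : forall x, gmul (ginv x) x = gone;
  gmulVr : forall x, gmul x (ginv x) = gone
}.
Arguments gmul {g}.
Arguments gone {g}.
Arguments ginv {g}.

Definition is_group_hom {G H : Group} (pi : G -> H) : Prop :=
  forall x y, pi (gmul x y) = gmul (pi x) (pi y).

(* A poset, regarded as a category with a (unique) morphism x -> y iff x <= y. *)
Record Poset := {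
  pcar :> Type;
  ple : pcar -> pcar -> Prop;
  ple_refl : forall x, ple x x;
  ple_antisym : forall x y, ple x y -> ple y x -> x = y;
  ple_trans : forall x y z, ple x y -> ple y z -> ple x z
}.
Arguments ple {p}.

Record Functor (D : Poset) (K : Group) := {
  fmap : forall x y : D, ple x y -> K;
  fmap_id : forall (x : D) (p : ple x x), fmap x x p = gone;
  fmap_comp : forall (x y z : D) (p : ple x y) (q : ple y z) (r : ple x z),
      fmap x z r = gmul (fmap y z q) (fmap x y p)
}.
Arguments fmap {D K}.

Definition is_nat (D : Poset) (K : Group) (F F' : Functor D K) (eta : D -> K)
  : Prop :=
  forall (x y : D) (p : ple x y),
    gmul (eta y) (fmap F x y p) = gmul (fmap F' x y p) (eta x).

Lemma hom_one (G H : Group) (pi : G -> H) :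
  is_group_hom pi -> pi gone = gone.
Proof.
  intros h.
  assert (E : gmul (pi gone) (pi gone) = gmul (pi gone) gone).
  { rewrite <- h, gmul1l, gmul1r. reflexivity. }
  assert (E2 := f_equal (gmul (ginv (pi gone))) E).
  rewrite !gmulA, gmulVl, !gmul1l in E2. exact E2.
Qed.

Definition PiF (D : Poset) (G H : Group) (pi : G -> H) (hpi : is_group_hom pi)
  (F : Functor D G) : Functor D H.
Proof.
  refine {| fmap := fun x y p => pi (fmap F x y p) |}.
  - intros x p. rewrite fmap_id. exact (hom_one hpi).
  - intros x y z p q r. rewrite (fmap_comp F x y z p q r). apply hpi.
Defined.

(* A subcategory of H^D containing all objects: a predicate on (component
   functions of) morphisms, consisting of natural transformations, containing
   identities and closed under composition. *)
Record Subcat (D : Poset) (K : Group) := {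
  smor : forall U V : Functor D K, (D -> K) -> Prop;
  smor_nat : forall U V eta, smor U V eta -> is_nat U V eta;
  smor_id : forall U, smor U U (fun _ => gone);
  smor_comp : forall U V W a b, smor U V a -> smor V W b ->
      smor U W (fun x => gmul (b x) (a x))
}.
Arguments smor {D K}.

(* Morphisms U -> V of the pull-back tilde(G^D): natural transformations eta
   in G^D with Pi(eta) a morphism of the subcategory S. *)
Definition tG_hom (D : Poset) (G H : Group) (pi : G -> H)
  (hpi : is_group_hom pi) (S : Subcat D H) (U V : Functor D G) (eta : D -> G)
  : Prop :=
  is_nat U V eta /\ smor S (PiF hpi U) (PiF hpi V) (fun x => pi (eta x)).

(* Main.v *)
Require Import Defs.
From Stdlib Require Import FunctionalExtensionality.

Lemma inv_mul_eq (K:Group) (a b c : K): a = gmul b c -> gmul (ginv a) b = ginv c.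
Proof.
  intro E. rewrite <- (gmul1r _ (gmul (ginv a) b)), <- (gmulVr _ c), gmulA.
  rewrite <- (gmulA _ (ginv a) b c), <- E, gmulVl, gmul1l. reflexivity.
Qed.

Lemma solve_r (K:Group) (a b d : K): gmul a b = d -> a = gmul d (ginv b).
Proof.
  intro E. rewrite <- E, <- gmulA, gmulVr, gmul1r. reflexivity.
Qed.

Lemma inv_uniq (K:Group) (a b : K): gmul a b = gone -> b = ginv a.
Proof.
  intro E. rewrite <- (gmul1l _ b), <- (gmulVl _ a), <- gmulA, E, gmul1r. reflexivity.
Qed.

Lemma inv_one (K:Group) : ginv (@gone K) = gone.
Proof. symmetry. apply inv_uniq. apply gmul1l. Qed.

Lemma hom_inv (G H : Group) (pi : G -> H) : is_group_hom pi ->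
  forall a, pi (ginv a) = ginv (pi a).
Proof.
  intros h a. apply inv_uniq. rewrite <- h, gmulVr. apply hom_one; exact h.
Qed.

Arguments hom_inv {G H pi}.

Section S.
Variables (D : Poset) (G : Group) (O : D) (hO : forall x : D, ple O x)
  (U V : Functor D G).

Definition mk (c : G) (x : D) : G :=
  gmul (gmul (fmap V O x (hO x)) c) (ginv (fmap U O x (hO x))).

Lemma mk_nat c : is_nat U V (mk c).
Proof.
  intros x y p. unfold mk.
  rewrite <- (gmulA _ (gmul (fmap V O y (hO y)) c)).
  rewrite (inv_mul_eq _ _ _ _ (fmap_comp U O x y (hO x) p (hO y))).
  rewrite (fmap_comp V O x y (hO x) p (hO y)).
  rewrite !gmulA. reflexivity.
Qed.

Lemma nat_mk eta : is_nat U V eta -> forall x, eta x = mk (eta O) x.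
Proof.
  intros Hn x. unfold mk. apply solve_r. apply Hn.
Qed.
End S.
Arguments mk {D G}.
Arguments nat_mk {D G}.
Arguments mk_nat {D G}.

Theorem proposition4 (G H : Group) (pi : G -> H) (hpi : is_group_hom pi)
  (pi_surj : forall h : H, exists g : G, pi g = h)
  (D : Poset) (O : D) (hO : forall x : D, ple O x)
  (S : Subcat D H)
  (S_single : forall U V : Functor D H,
      exists eta, smor S U V eta /\
        (forall eta', smor S U V eta' -> forall x, eta' x = eta x))
  (U V : Functor D G) :
  exists g : G,
    (* the image of eta |-> eta_O lies in the coset g Z, Z = ker pi *)
    (forall eta, tG_hom hpi S U V eta ->
       exists z : G, pi z = gone /\ eta O = gmul g z) /\
    (* ... and is all of g Z *)
    (forall z : G, pi z = gone ->
       exists eta, tG_hom hpi S U V eta /\ eta O = gmul g z) /\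
    (* the map eta |-> eta_O is injective *)
    (forall eta eta', tG_hom hpi S U V eta -> tG_hom hpi S U V eta' ->
       eta O = eta' O -> forall x, eta x = eta' x).
Proof.
  destruct (S_single (PiF hpi U) (PiF hpi V)) as [th [Hth Huniq]].
  pose proof (smor_nat S _ _ _ Hth) as Hthn.
  destruct (pi_surj (th O)) as [g Hg].
  exists g. split; [|split].
  - intros eta [Hn Hs]. exists (gmul (ginv g) (eta O)). split.
    + rewrite hpi, (hom_inv hpi), Hg, (Huniq _ Hs O), gmulVl. reflexivity.
    + rewrite gmulA, gmulVr, gmul1l. reflexivity.
  - intros z Hz. exists (mk O hO U V (gmul g z)). split; [split|].
    + apply mk_nat.
    + replace (fun x => pi (mk O hO U V (gmul g z) x)) with th. exact Hth.
      apply functional_extensionality. intro x. unfold mk.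
      rewrite !hpi, (hom_inv hpi), Hz, gmul1r, Hg.
      apply solve_r. apply (Hthn O x (hO x)).
    + unfold mk. rewrite !fmap_id, inv_one, gmul1l, gmul1r. reflexivity.
  - intros eta eta' [Hn _] [Hn' _] E x.
    rewrite (nat_mk O hO U V eta Hn), (nat_mk O hO U V eta' Hn'), E. reflexivity.
Qed.
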